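(* Let $\mathcal{Q}$ be a small involutive quantaloid. For every $\mathcal{Q}$-category $\mathbb{A}$, the assignment $L_{\mathbb{A}}\colon(\mathbb{A}_{\mathsf s})_{\mathsf{sc}}\to(\mathbb{A}_{\mathsf{cc}})_{\mathsf s}$, $\phi\mapsto\mathbb{A}(-,S_{\mathbb{A}}-)\otimes\phi$, is a full embedding of $\mathcal{Q}$-categories (fully faithful and injective on objects), and these functors form a natural transformation $L\colon(-)_{\mathsf{sc}}\circ(-)_{\mathsf s}\Rightarrow(-)_{\mathsf s}\circ(-)_{\mathsf{cc}}$ of functors $\mathsf{Cat}(\mathcal{Q})\to\mathsf{SymCat}(\mathcal{Q})$. Moreover, for every $\mathcal{Q}$-category $\mathbb{A}$, $(\mathbb{A}_{\mathsf{cc}})_{\mathsf s}$ is symmetrically complete.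
   Context: A quantaloid is a category enriched in $\mathsf{Sup}$; an involution is an identity-on-objects, direction-reversing, monotone map $f\mapsto f^{\mathsf o}$ on morphisms with $(g\circ f)^{\mathsf o}=f^{\mathsf o}\circ g^{\mathsf o}$, $f^{\mathsf{oo}}=f$. A $\mathcal{Q}$-category $\mathbb{A}$: objects with types $tx$, homs $\mathbb{A}(y,x)\colon tx\to ty$ with $\mathbb{A}(z,y)\circ\mathbb{A}(y,x)\le\mathbb{A}(z,x)$, $1_{tx}\le\mathbb{A}(x,x)$; symmetric if $\mathbb{A}(x,y)=\mathbb{A}(y,x)^{\mathsf o}$. Functors: type-preserving $F$ with $\mathbb{A}(y,x)\le\mathbb{B}(Fy,Fx)$; categories $\mathsf{Cat}(\mathcal{Q})$ and (full) $\mathsf{SymCat}(\mathcal{Q})$. Symmetrisation: $\mathbb{A}_{\mathsf s}$ has the same objects and $\mathbb{A}_{\mathsf s}(y,x)=\mathbb{A}(y,x)\wedge\mathbb{A}(x,y)^{\mathsf o}$; $F_{\mathsf s}x=Fx$; $S_{\mathbb{A}}\colon\mathbb{A}_{\mathsf s}\to\mathbb{A}$ is the identity on objects. Distributors $\Phi\colon\mathbb{A}\to\mathbb{B}$: arrows $\Phi(y,x)\colon tx\to ty$ with $\mathbb{B}(y',y)\circ\Phi(y,x)\le\Phi(y',x)$, $\Phi(y,x)\circ\mathbb{A}(x,x')\le\Phi(y,x')$; composition $(\Psi\otimes\Phi)(z,x)=\bigvee_y\Psi(z,y)\circ\Phi(y,x)$; left adjoint with right adjoint $\Phi^*$ if $\mathbb{A}\le\Phi^*\otimes\Phi$,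 $\Phi\otimes\Phi^*\le\mathbb{B}$. A functor $F$ gives the distributor $\mathbb{B}(-,F-)$ (elements $\mathbb{B}(y,Fx)$); e.g. $\mathbb{A}(-,S_{\mathbb{A}}-)\colon\mathbb{A}_{\mathsf s}\to\mathbb{A}$ has elements $\mathbb{A}(y,x)$. For symmetric domain and codomain, $\Phi^{\mathsf o}(x,y)=\Phi(y,x)^{\mathsf o}$, and $\Phi$ is a symmetric left adjoint if left adjoint to $\Phi^{\mathsf o}$. $*_X$: one object of type $X$, hom $1_X$; presheaf: distributor $*_X\to\mathbb{A}$, representable if equal to $\mathbb{A}(-,a)$. Cauchy completion $\mathbb{A}_{\mathsf{cc}}$: objects the left adjoint presheaves $\phi\colon*_X\to\mathbb{A}$ (type $X$), hom the unique element of $\psi^*\otimes\phi$; $F_{\mathsf{cc}}(\phi)=\mathbb{B}(-,F-)\otimes\phi$. For symmetric $\mathbb{A}$, $\mathbb{A}_{\mathsf{sc}}$ is the full subcategory of $\mathbb{A}_{\mathsf{cc}}$ on symmetric left adjoint presheaves, and $F_{\mathsf{sc}}(\phi)=\mathbb{B}(-,F-)\otimes\phi$. A symmetric $\mathcal{Q}$-category is symmetrically complete if each of its symmetric left adjoint presheaves is representable. Naturality of $L$ means $(F_{\mathsf{cc}})_{\mathsf s}\circ L_{\mathbb{A}}=L_{\mathbb{B}}\circ(F_{\mathsf s})_{\mathsf{sc}}$ for every functor $F\colon\mathbb{A}\to\mathbb{B}$. *)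

(* Defs.v *)
From Stdlib Require Import ClassicalEpsilon.

Unset Strict Implicit.

(* A (small) quantaloid: objects [qob], for each X Y a complete (sup-)lattice
   [qhom X Y] of arrows X -> Y (order [qle], arbitrary joins [qsup]),
   composition [qcomp g f] (= g o f) preserving arbitrary joins in each
   variable, identities. *)
Record Quantaloid : Type := {
  qob : Type;
  qhom : qob -> qob -> Type;
  qle : forall X Y, qhom X Y -> qhom X Y -> Prop;
  qsup : forall X Y, (qhom X Y -> Prop) -> qhom X Y;
  qcomp : forall X Y Z, qhom Y Z -> qhom X Y -> qhom X Z;
  qid : forall X, qhom X X;
  qle_refl : forall X Y (f : qhom X Y), qle X Y f f;
  qle_trans : forall X Y (f g h : qhom X Y),
      qle X Y f g -> qle X Y g h -> qle X Y f h;
  qle_antisym : forall X Y (f g : qhom X Y),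
      qle X Y f g -> qle X Y g f -> f = g;
  qsup_ub : forall X Y (S : qhom X Y -> Prop) f, S f -> qle X Y f (qsup X Y S);
  qsup_least : forall X Y (S : qhom X Y -> Prop) g,
      (forall f, S f -> qle X Y f g) -> qle X Y (qsup X Y S) g;
  qcompA : forall X Y Z W (f : qhom X Y) (g : qhom Y Z) (h : qhom Z W),
      qcomp X Z W h (qcomp X Y Z g f) = qcomp X Y W (qcomp Y Z W h g) f;
  qcomp1l : forall X Y (f : qhom X Y), qcomp X Y Y (qid Y) f = f;
  qcomp1r : forall X Y (f : qhom X Y), qcomp X X Y f (qid X) = f;
  qcomp_supl : forall X Y Z (g : qhom Y Z) (S : qhom X Y -> Prop),
      qcomp X Y Z g (qsup X Y S)
      = qsup X Z (fun h => exists f, S f /\ h = qcomp X Y Z g f);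
  qcomp_supr : forall X Y Z (S : qhom Y Z -> Prop) (f : qhom X Y),
      qcomp X Y Z (qsup Y Z S) f
      = qsup X Z (fun h => exists g, S g /\ h = qcomp X Y Z g f)
}.

Arguments qle {q X Y}.
Arguments qsup {q X Y}.
Arguments qcomp {q X Y Z}.
Arguments qid {q}.

Record IQuantaloid : Type := {
  iq :> Quantaloid;
  qinv : forall X Y, qhom iq X Y -> qhom iq Y X;
  qinv_mono : forall X Y (f g : qhom iq X Y),
      qle f g -> qle (qinv X Y f) (qinv X Y g);
  qinv_comp : forall X Y Z (f : qhom iq X Y) (g : qhom iq Y Z),
      qinv X Z (qcomp g f) = qcomp (qinv X Y f) (qinv Y Z g);
  qinv_inv : forall X Y (f : qhom iq X Y), qinv Y X (qinv X Y f) = f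
}.

Arguments qinv {i X Y}.

Set Implicit Arguments.

Section QCategories.
Variable Q : IQuantaloid.

Definition qmeet {X Y} (f g : qhom Q X Y) : qhom Q X Y :=
  qsup (fun h => qle h f /\ qle h g).

Definition qbot {X Y} : qhom Q X Y := qsup (fun _ => False).

(* A Q-category is presented as a Q_0-indexed family of object sets:
   [cob A X] is the set of objects x with type t x = X.
   [chom A y x] = A(y,x) : t x -> t y. *)
Record QCat : Type := {
  cob : qob Q -> Type;
  chom : forall X Y, cob Y -> cob X -> qhom Q X Y
}.
Arguments chom _ {X Y}.

Definition is_qcat (A : QCat) : Prop :=
  (forall X Y Z (z : cob A Z) (y : cob A Y) (x : cob A X),
      qle (qcomp (chom A z y) (chom A y x)) (chom A z x)) /\
  (forall X (x : cob A X), qle (qid X) (chom A x x)).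

Definition is_symmetric (A : QCat) : Prop :=
  forall X Y (y : cob A Y) (x : cob A X), chom A x y = qinv (chom A y x).

Definition is_functor (A B : QCat) (F : forall X, cob A X -> cob B X) : Prop :=
  forall X Y (y : cob A Y) (x : cob A X),
    qle (chom A y x) (chom B (F Y y) (F X x)).

Definition fully_faithful (A B : QCat) (F : forall X, cob A X -> cob B X) : Prop :=
  forall X Y (y : cob A Y) (x : cob A X),
    chom B (F Y y) (F X x) = chom A y x.

Definition injective_on_objects (A B : QCat) (F : forall X, cob A X -> cob B X)
  : Prop := forall X (x x' : cob A X), F X x = F X x' -> x = x'.

Definition dist (A B : QCat) : Type :=
  forall X Y, cob B Y -> cob A X -> qhom Q X Y.

Definition is_dist (A B : QCat) (P : dist A B) : Prop :=
  (forall X Y Y' (y' : cob B Y') (y : cob B Y) (x : cob A X),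
      qle (qcomp (chom B y' y) (P X Y y x)) (P X Y' y' x)) /\
  (forall X X' Y (y : cob B Y) (x : cob A X) (x' : cob A X'),
      qle (qcomp (P X Y y x) (chom A x x')) (P X' Y y x')).

Definition dcomp (A B C : QCat) (P2 : dist B C) (P1 : dist A B) : dist A C :=
  fun X Z z x =>
    qsup (fun h => exists Y (y : cob B Y), h = qcomp (P2 Y Z z y) (P1 X Y y x)).

Definition dle (A B : QCat) (P P' : dist A B) : Prop :=
  forall X Y (y : cob B Y) (x : cob A X), qle (P X Y y x) (P' X Y y x).

Definition did (A : QCat) : dist A A := fun X Y y x => chom A y x.
Arguments did : clear implicits.

Definition is_ladj (A B : QCat) (P : dist A B) (P' : dist B A) : Prop :=
  is_dist P /\ is_dist P' /\ dle (did A) (dcomp P' P) /\ dle (dcomp P P') (did B).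

Definition dconv (A B : QCat) (P : dist A B) : dist B A :=
  fun X Y (a : cob A Y) (b : cob B X) => qinv (P Y X b a).

Definition fdist (A B : QCat) (F : forall X, cob A X -> cob B X) : dist A B :=
  fun X Y (y : cob B Y) (x : cob A X) => chom B y (F X x).

Inductive single (X : qob Q) : qob Q -> Type := pt : single X X.

Definition star (X : qob Q) : QCat :=
  {| cob := single X;
     chom := fun Y Y' (b : single X Y') (a : single X Y) =>
       match a in single _ Y0 return qhom Q Y0 Y' with
       | pt _ => match b in single _ Y1 return qhom Q X Y1 with
                 | pt _ => qid X end end |}.

(* a presheaf phi : *_X -> A, given by its elements phi(a) : X -> t a *)
Definition psh (X : qob Q) (A : QCat) : Type := forall Z, cob A Z -> qhom Q X Z.

Definition psh_dist X A (phi : psh X A) : dist (star X) A :=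
  fun Y Z (z : cob A Z) (s : single X Y) =>
    match s in single _ Y0 return qhom Q Y0 Z with pt _ => phi Z z end.

Definition dist_psh X A (P : dist (star X) A) : psh X A :=
  fun Z z => P X Z z (@pt X).

Definition is_ladj_psh X A (phi : psh X A) : Prop :=
  exists P' : dist A (star X), is_ladj (psh_dist phi) P'.

Definition is_sladj_psh X A (phi : psh X A) : Prop :=
  is_ladj (psh_dist phi) (dconv (psh_dist phi)).

(* the (chosen) right adjoint; unique when it exists *)
Definition radj X A (phi : psh X A) : dist A (star X) :=
  epsilon (inhabits (fun _ _ _ _ => qbot)) (fun P' => is_ladj (psh_dist phi) P').

(* hom of the Cauchy completion: the unique element of psi^* (x) phi *)
Definition cc_hom A X Y (psi : psh Y A) (phi : psh X A) : qhom Q X Y :=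
  dcomp (radj psi) (psh_dist phi) (@pt Y) (@pt X).

Definition cc (A : QCat) : QCat :=
  {| cob := fun X => {phi : psh X A | is_ladj_psh phi};
     chom := fun X Y psi phi => cc_hom (proj1_sig psi) (proj1_sig phi) |}.

Definition sym (A : QCat) : QCat :=
  {| cob := cob A;
     chom := fun X Y (y : cob A Y) (x : cob A X) =>
       qmeet (chom A y x) (qinv (chom A x y)) |}.

Definition sc (A : QCat) : QCat :=
  {| cob := fun X => {phi : cob (cc A) X | is_sladj_psh (proj1_sig phi)};
     chom := fun X Y psi phi => chom (cc A) (proj1_sig psi) (proj1_sig phi) |}.

Definition Sfun (A : QCat) : forall X, cob (sym A) X -> cob A X := fun X x => x.
Arguments Sfun : clear implicits.

Definition Ffun_s (A B : QCat) (F : forall X, cob A X -> cob B X) :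
  forall X, cob (sym A) X -> cob (sym B) X := F.

Definition L_psh (A : QCat) X (phi : psh X (sym A)) : psh X A :=
  dist_psh (dcomp (fdist (Sfun A)) (psh_dist phi)).

Definition Fcc_psh (A B : QCat) (F : forall X, cob A X -> cob B X) X
  (phi : psh X A) : psh X B :=
  dist_psh (dcomp (fdist F) (psh_dist phi)).

Definition Fsc_psh (A B : QCat) (F : forall X, cob A X -> cob B X) X
  (phi : psh X (sym A)) : psh X (sym B) :=
  dist_psh (dcomp (fdist (Ffun_s F)) (psh_dist phi)).

Definition sym_complete (A : QCat) : Prop :=
  forall X (phi : psh X A), is_sladj_psh phi ->
    exists a : cob A X, forall Z (z : cob A Z), phi Z z = chom A z a.

End QCategories.

Arguments chom {Q} _ {X Y}.

Arguments dist_psh {Q X A} P Z z.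
Arguments L_psh {Q A X} phi Z z.
Arguments Fcc_psh {Q A B} F {X} phi Z z.
Arguments Fsc_psh {Q A B} F {X} phi Z z.
Arguments Sfun {Q} A X x.

(* Main.v *)
Require Import Defs.
From Stdlib Require Import ClassicalEpsilon FunctionalExtensionality ProofIrrelevance.
Set Implicit Arguments.
Unset Strict Implicit.

Lemma qsup_pair {Q : Quantaloid} X Y (f g : qhom Q X Y) :
  qle f g -> qsup (fun h => h = f \/ h = g) = g.
Proof.
  intro H. apply qle_antisym.
  - apply qsup_least. intros h [->| ->]; auto using qle_refl.
  - apply qsup_ub. auto.
Qed.

Lemma comp_mono_r {Q : Quantaloid} X Y Z (g : qhom Q Y Z) (f f' : qhom Q X Y) :
  qle f f' -> qle (qcomp g f) (qcomp g f').
Proof.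
  intro H. rewrite <- (qsup_pair H). rewrite qcomp_supl.
  apply qsup_ub. exists f. auto.
Qed.

Lemma comp_mono_l {Q : Quantaloid} X Y Z (g g' : qhom Q Y Z) (f : qhom Q X Y) :
  qle g g' -> qle (qcomp g f) (qcomp g' f).
Proof.
  intro H. rewrite <- (qsup_pair H). rewrite qcomp_supr.
  apply qsup_ub. exists g. auto.
Qed.

Lemma comp_mono {Q : Quantaloid} X Y Z (g g' : qhom Q Y Z) (f f' : qhom Q X Y) :
  qle g g' -> qle f f' -> qle (qcomp g f) (qcomp g' f').
Proof.
  intros; eapply qle_trans; [apply comp_mono_l; eauto| apply comp_mono_r; eauto].
Qed.

Lemma le_sup {Q : Quantaloid} X Y (S : qhom Q X Y -> Prop) f g :
  S f -> qle g f -> qle g (qsup S).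
Proof. intros; eapply qle_trans; eauto using qsup_ub. Qed.

Lemma comp_supl_le {Q : Quantaloid} X Y Z (g : qhom Q Y Z) (S : qhom Q X Y -> Prop) h :
  (forall f, S f -> qle (qcomp g f) h) -> qle (qcomp g (qsup S)) h.
Proof.
  intro H. rewrite qcomp_supl. apply qsup_least. intros k [f [Hf ->]]. auto.
Qed.

Lemma comp_supr_le {Q : Quantaloid} X Y Z (S : qhom Q Y Z -> Prop) (f : qhom Q X Y) h :
  (forall g, S g -> qle (qcomp g f) h) -> qle (qcomp (qsup S) f) h.
Proof.
  intro H. rewrite qcomp_supr. apply qsup_least. intros k [g [Hg ->]]. auto.
Qed.

Lemma sandwich {Q : Quantaloid} X Y Z W (h : qhom Q Z W) (S : qhom Q Y Z -> Prop)
  (x : qhom Q Y Z) (k : qhom Q X Y) g :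
  qle x (qsup S) -> (forall s, S s -> qle (qcomp h (qcomp s k)) g) ->
  qle (qcomp h (qcomp x k)) g.
Proof.
  intros Hx H. eapply qle_trans.
  - apply comp_mono_r. apply comp_mono_l. exact Hx.
  - rewrite qcomp_supr, qcomp_supl. apply qsup_least. intros k' [f [[s [Hs ->]] ->]]. auto.
Qed.


Lemma iinv_comp {Q : IQuantaloid} {X Y Z} (f : qhom Q X Y) (g : qhom Q Y Z) :
  qinv (qcomp g f) = qcomp (qinv f) (qinv g).
Proof. apply qinv_comp. Qed.
Lemma iinv_inv {Q : IQuantaloid} {X Y} (f : qhom Q X Y) : qinv (qinv f) = f.
Proof. apply qinv_inv. Qed.
Lemma iinv_mono {Q : IQuantaloid} {X Y} (f g : qhom Q X Y) : qle f g -> qle (qinv f) (qinv g).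
Proof. apply qinv_mono. Qed.
Lemma inv_le_l {Q : IQuantaloid} {X Y} (f : qhom Q X Y) g : qle f (qinv g) -> qle (qinv f) g.
Proof. intro H. rewrite <- (iinv_inv g). apply iinv_mono. exact H. Qed.
Lemma inv_le_r {Q : IQuantaloid} {X Y} (f : qhom Q Y X) g : qle (qinv f) g -> qle f (qinv g).
Proof. intro H. rewrite <- (iinv_inv f). apply iinv_mono. exact H. Qed.

Lemma qinv_id {Q : IQuantaloid} X : qinv (qid X) = qid (q:=Q) X.
Proof.
  pose proof (iinv_comp (qinv (qid X)) (qid X)) as H.
  rewrite qcomp1l, !iinv_inv, qcomp1l in H.
  symmetry; exact H.
Qed.

Lemma meet_l {Q : IQuantaloid} {X Y} (f g : qhom Q X Y) : qle (qmeet f g) f.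
Proof. apply qsup_least. intros h [H _]; exact H. Qed.
Lemma meet_r {Q : IQuantaloid} {X Y} (f g : qhom Q X Y) : qle (qmeet f g) g.
Proof. apply qsup_least. intros h [_ H]; exact H. Qed.
Lemma meet_glb {Q : IQuantaloid} {X Y} (f g h : qhom Q X Y) :
  qle h f -> qle h g -> qle h (qmeet f g).
Proof. intros; apply qsup_ub; auto. Qed.
Lemma meet_comm {Q : IQuantaloid} {X Y} (f g : qhom Q X Y) : qmeet f g = qmeet g f.
Proof. apply qle_antisym; apply meet_glb; auto using meet_l, meet_r. Qed.
Lemma inv_meet {Q : IQuantaloid} {X Y} (f g : qhom Q X Y) :
  qinv (qmeet f g) = qmeet (qinv f) (qinv g).
Proof.
  apply qle_antisym.
  - apply meet_glb; apply iinv_mono; auto using meet_l, meet_r.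
  - apply inv_le_r. apply meet_glb; apply inv_le_l; auto using meet_l, meet_r.
Qed.

Definition rdist {Q : IQuantaloid} {A : QCat Q} {X} (R : forall Z, cob A Z -> qhom Q Z X)
  : dist A (star X) :=
  fun X0 Y s x => match s in single _ Y0 return qhom Q X0 Y0 with pt _ => R X0 x end.

Definition unitsup {Q : IQuantaloid} {A : QCat Q} {X} (R : forall Z, cob A Z -> qhom Q Z X)
  (phi : psh X A) : qhom Q X X :=
  qsup (fun h => exists Y (y : cob A Y), h = qcomp (R Y y) (phi Y y)).

Lemma ladj_intro {Q : IQuantaloid} (A : QCat Q) X (phi : psh X A)
  (R : forall Z, cob A Z -> qhom Q Z X) :
  (forall Y Y' (y' : cob A Y') (y : cob A Y), qle (qcomp (chom A y' y) (phi Y y)) (phi Y' y')) ->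
  (forall Z Z' (z : cob A Z) (z' : cob A Z'), qle (qcomp (R Z z) (chom A z z')) (R Z' z')) ->
  qle (qid X) (unitsup R phi) ->
  (forall Y Z (y : cob A Y) (z : cob A Z), qle (qcomp (phi Y y) (R Z z)) (chom A y z)) ->
  is_ladj (psh_dist phi) (rdist R).
Proof.
  intros H1 H2 H3 H4. split; [|split; [|split]].
  - split.
    + intros X0 Y Y' y' y x. destruct x. simpl. apply H1.
    + intros X0 X' Y y x x'. destruct x. destruct x'. simpl. rewrite qcomp1r. apply qle_refl.
  - split.
    + intros X0 Y Y' y' y x. destruct y. destruct y'. simpl. rewrite qcomp1l. apply qle_refl.
    + intros X0 X' Y y x x'. destruct y. simpl. apply H2.
  - intros X0 Y0 y x. destruct y. destruct x. simpl.
    eapply qle_trans; [exact H3|]. apply qsup_least. intros h [Y [y ->]].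
    apply qsup_ub. exists Y, y. reflexivity.
  - intros X0 Y0 y x. unfold dcomp. apply qsup_least. intros h [Y [s ->]].
    destruct s. simpl. apply H4.
Qed.

Lemma ladj_elim {Q : IQuantaloid} (A : QCat Q) X (phi : psh X A) (P : dist A (star X)) :
  is_ladj (psh_dist phi) P ->
  (forall Y Y' (y' : cob A Y') (y : cob A Y), qle (qcomp (chom A y' y) (phi Y y)) (phi Y' y')) /\
  (forall Z Z' (z : cob A Z) (z' : cob A Z'),
      qle (qcomp (P Z X (pt X) z) (chom A z z')) (P Z' X (pt X) z')) /\
  qle (qid X) (unitsup (fun Z z => P Z X (pt X) z) phi) /\
  (forall Y Z (y : cob A Y) (z : cob A Z), qle (qcomp (phi Y y) (P Z X (pt X) z)) (chom A y z)).
Proof.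
  intros [[D1 D2] [[E1 E2] [U C]]]. split; [|split; [|split]].
  - intros. exact (D1 X Y Y' y' y (pt X)).
  - intros. apply E2.
  - eapply qle_trans; [exact (U X X (pt X) (pt X))|]. apply qsup_least.
    intros h [Y [y ->]]. apply qsup_ub. exists Y, y. reflexivity.
  - intros. eapply qle_trans; [|exact (C Z Y y z)]. apply qsup_ub. exists X, (pt X). reflexivity.
Qed.

Lemma radj_unique {Q : IQuantaloid} (A : QCat Q) X (phi : psh X A) (P1 P2 : dist A (star X)) :
  is_ladj (psh_dist phi) P1 -> is_ladj (psh_dist phi) P2 ->
  forall Z (z : cob A Z), qle (P1 Z X (pt X) z) (P2 Z X (pt X) z).
Proof.
  intros L1 L2 Z z.
  destruct (ladj_elim L1) as [_ [_ [_ C1]]].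
  destruct (ladj_elim L2) as [_ [D2 [U2 _]]].
  rewrite <- (qcomp1l _ _ _ (P1 Z X (pt X) z)).
  eapply qle_trans; [apply comp_mono_l; exact U2|].
  apply comp_supr_le. intros g [Y [y ->]]. rewrite <- qcompA.
  eapply qle_trans; [apply comp_mono_r; apply C1|]. apply D2.
Qed.

Lemma radj_spec {Q : IQuantaloid} (A : QCat Q) X (phi : psh X A) :
  is_ladj_psh phi -> is_ladj (psh_dist phi) (radj phi).
Proof.
  intros [P HP]. unfold radj. apply epsilon_spec. exists P. exact HP.
Qed.

Lemma radj_eq {Q : IQuantaloid} (A : QCat Q) X (phi : psh X A) (P : dist A (star X)) :
  is_ladj (psh_dist phi) P ->
  forall Z (z : cob A Z), @radj _ _ _ phi Z X (pt X) z = P Z X (pt X) z.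
Proof.
  intros HP Z z. assert (H := radj_spec (ex_intro _ P HP)).
  apply qle_antisym; eapply radj_unique; eauto.
Qed.

Lemma Lpsh_eq {Q : IQuantaloid} (A : QCat Q) X (phi : psh X (sym A)) Z (z : cob A Z) :
  L_psh phi Z z = qsup (fun h => exists Y (y : cob A Y), h = qcomp (chom A z y) (phi Y y)).
Proof. reflexivity. Qed.

Lemma Fcc_eq {Q : IQuantaloid} (A B : QCat Q) (F : forall X, cob A X -> cob B X) X
  (psi : psh X A) Z (z : cob B Z) :
  Fcc_psh F psi Z z = qsup (fun h => exists Y (y : cob A Y), h = qcomp (chom B z (F Y y)) (psi Y y)).
Proof. reflexivity. Qed.

Lemma Fsc_eq {Q : IQuantaloid} (A B : QCat Q) (F : forall X, cob A X -> cob B X) X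
  (phi : psh X (sym A)) Z (z : cob B Z) :
  Fsc_psh F phi Z z = qsup (fun h => exists Y (y : cob A Y),
     h = qcomp (qmeet (chom B z (F Y y)) (qinv (chom B (F Y y) z))) (phi Y y)).
Proof. reflexivity. Qed.

Lemma cchom_eq {Q : IQuantaloid} (A : QCat Q) X Y (psi : psh Y A) (phi : psh X A) :
  cc_hom psi phi = qsup (fun h => exists Z (z : cob A Z),
     h = qcomp (@radj _ _ _ psi Z Y (pt Y) z) (phi Z z)).
Proof. reflexivity. Qed.

Lemma one_le_symhom {Q : IQuantaloid} (A : QCat Q) X (x : cob A X) :
  is_qcat A -> qle (qid X) (qmeet (chom A x x) (qinv (chom A x x))).
Proof.
  intros [_ HA]. apply meet_glb; auto. rewrite <- qinv_id. apply iinv_mono. auto.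
Qed.

Lemma naturality {Q : IQuantaloid} (A B : QCat Q) (F : forall X, cob A X -> cob B X) :
  is_qcat A -> is_qcat B -> is_functor F ->
  forall X (phi : psh X (sym A)) Z (z : cob B Z),
    Fcc_psh F (L_psh phi) Z z = L_psh (Fsc_psh F phi) Z z.
Proof.
  intros HA HB HF X phi Z z. destruct HB as [HBc HBu]. pose proof HA as HA'. destruct HA' as [HAc HAu].
  rewrite Fcc_eq, Lpsh_eq. apply qle_antisym.
  - apply qsup_least. intros h [Y [y ->]]. rewrite Lpsh_eq.
    apply comp_supl_le. intros s [Y' [a ->]].
    eapply le_sup. { exists Y', (F Y' a). reflexivity. }
    rewrite qcompA. apply comp_mono.
    + eapply qle_trans; [apply comp_mono_r; apply HF|]. apply HBc.
    + rewrite Fsc_eq. eapply le_sup. { exists Y', a. reflexivity. }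
      rewrite <- (qcomp1l _ _ _ (phi Y' a)) at 1. apply comp_mono_l.
      apply one_le_symhom; exact (conj HBc HBu).
  - apply qsup_least. intros h [W [w ->]]. rewrite Fsc_eq.
    apply comp_supl_le. intros s [Y' [a ->]].
    eapply le_sup. { exists Y', a. reflexivity. }
    rewrite qcompA. apply comp_mono.
    + eapply qle_trans; [apply comp_mono_r; apply meet_l|]. apply HBc.
    + rewrite Lpsh_eq. eapply le_sup. { exists Y', a. reflexivity. }
      rewrite <- (qcomp1l _ _ _ (phi Y' a)) at 1. apply comp_mono_l. apply HAu.
Qed.

Definition Hs {Q : IQuantaloid} {A : QCat Q} {X Y} (psi : psh Y A) (phi : psh X A) : qhom Q X Y :=
  qsup (fun h => exists Z (z : cob A Z), h = qcomp (qinv (psi Z z)) (phi Z z)).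

Lemma sladj_facts {Q : IQuantaloid} (A : QCat Q) X (phi : psh X A) :
  is_sladj_psh phi ->
  (forall Y Y' (y' : cob A Y') (y : cob A Y), qle (qcomp (chom A y' y) (phi Y y)) (phi Y' y')) /\
  qle (qid X) (Hs phi phi) /\
  (forall Y Z (y : cob A Y) (z : cob A Z), qle (qcomp (phi Y y) (qinv (phi Z z))) (chom A y z)).
Proof.
  intro H. destruct (ladj_elim H) as [S1 [_ [S3 S4]]]. split; [exact S1|split; [|exact S4]].
  exact S3.
Qed.

Lemma inv_sup_le {Q : IQuantaloid} {X Y} (S : qhom Q X Y -> Prop) g :
  (forall s, S s -> qle (qinv s) g) -> qle (qinv (qsup S)) g.
Proof.
  intro H. apply inv_le_l. apply qsup_least. intros s Hs. apply inv_le_r. auto.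
Qed.

Definition RL {Q : IQuantaloid} {A : QCat Q} {X} (phi : psh X (sym A)) Z (z : cob A Z) : qhom Q Z X :=
  qsup (fun h => exists Y (y : cob A Y), h = qcomp (qinv (phi Y y)) (chom A y z)).
Arguments RL {Q A X} phi Z z.

Lemma symA_le {Q : IQuantaloid} (A : QCat Q) X Y (y : cob A Y) (x : cob A X) :
  qle (chom (sym A) y x) (chom A y x).
Proof. apply meet_l. Qed.

Lemma phi_le_L {Q : IQuantaloid} (A : QCat Q) X (phi : psh X (sym A)) Z (z : cob A Z) :
  is_qcat A -> qle (phi Z z) (L_psh phi Z z).
Proof.
  intros [_ HA]. rewrite Lpsh_eq. eapply le_sup. { exists Z, z. reflexivity. }
  rewrite <- (qcomp1l _ _ _ (phi Z z)) at 1. apply comp_mono_l. apply HA.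
Qed.

Lemma phi_le_RL {Q : IQuantaloid} (A : QCat Q) X (phi : psh X (sym A)) Z (z : cob A Z) :
  is_qcat A -> qle (qinv (phi Z z)) (RL phi Z z).
Proof.
  intros [_ HA]. unfold RL. eapply le_sup. { exists Z, z. reflexivity. }
  rewrite <- (qcomp1r _ _ _ (qinv (phi Z z))) at 1. apply comp_mono_r. apply HA.
Qed.

Lemma psi_RL_le {Q : IQuantaloid} (A : QCat Q) Y (psi : psh Y (sym A)) C (c : cob A C) B (b : cob A B) :
  is_qcat A -> is_sladj_psh psi -> qle (qcomp (psi C c) (RL psi B b)) (chom A c b).
Proof.
  intros [HAc _] Hs. destruct (sladj_facts Hs) as [_ [_ S4]].
  unfold RL. apply comp_supl_le. intros s [Z [a ->]].
  rewrite qcompA. eapply qle_trans; [|apply (HAc _ _ _ c a b)]. apply comp_mono_l.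
  eapply qle_trans; [apply S4|]. apply symA_le.
Qed.

Lemma L_phi_le {Q : IQuantaloid} (A : QCat Q) X (phi : psh X (sym A)) C (c : cob A C) B (b : cob A B) :
  is_qcat A -> is_sladj_psh phi -> qle (qcomp (L_psh phi B b) (qinv (phi C c))) (chom A b c).
Proof.
  intros [HAc _] Hs. destruct (sladj_facts Hs) as [_ [_ S4]].
  rewrite Lpsh_eq. apply comp_supr_le. intros s [Z [a ->]].
  rewrite <- qcompA. eapply qle_trans; [|apply (HAc _ _ _ b a c)]. apply comp_mono_r.
  eapply qle_trans; [apply S4|]. apply symA_le.
Qed.

Lemma L_ladj {Q : IQuantaloid} (A : QCat Q) X (phi : psh X (sym A)) :
  is_qcat A -> is_sladj_psh phi -> is_ladj (psh_dist (L_psh phi)) (rdist (RL phi)).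
Proof.
  intros HA Hs. pose proof HA as [HAc HAu].
  destruct (sladj_facts Hs) as [S1 [S3 S4]].
  apply ladj_intro.
  - intros Y Y' y' y. rewrite Lpsh_eq. apply comp_supl_le. intros s [Z [a ->]].
    rewrite Lpsh_eq. eapply le_sup. { exists Z, a. reflexivity. }
    rewrite qcompA. apply comp_mono_l. apply HAc.
  - intros Z Z' z z'. unfold RL. apply comp_supr_le. intros s [Y [a ->]].
    eapply le_sup. { exists Y, a. reflexivity. }
    rewrite <- qcompA. apply comp_mono_r. apply HAc.
  - eapply qle_trans; [exact S3|]. apply qsup_least. intros h [Z [z ->]].
    eapply le_sup. { exists Z, z. reflexivity. }
    apply comp_mono; [apply phi_le_RL|apply phi_le_L]; exact HA.
  - intros Y Z y z. rewrite Lpsh_eq at 1. apply comp_supr_le. intros s [W [a ->]].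
    rewrite <- qcompA. eapply qle_trans; [|apply (HAc _ _ _ y a z)]. apply comp_mono_r.
    apply psi_RL_le; assumption.
Qed.

Lemma sc_hom_eq {Q : IQuantaloid} (A : QCat Q) X Y (psi : psh Y (sym A)) (phi : psh X (sym A)) :
  is_sladj_psh psi -> cc_hom psi phi = Hs psi phi.
Proof.
  intro Hp. rewrite cchom_eq. unfold Hs. apply qle_antisym.
  - apply qsup_least. intros h [Z [z ->]]. eapply le_sup. { exists Z, z. reflexivity. }
    rewrite (radj_eq Hp). apply qle_refl.
  - apply qsup_least. intros h [Z [z ->]]. eapply le_sup. { exists Z, z. reflexivity. }
    rewrite (radj_eq Hp). apply qle_refl.
Qed.

Lemma ccL_hom_eq {Q : IQuantaloid} (A : QCat Q) X Y (psi : psh Y (sym A)) (phi : psh X (sym A)) :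
  is_qcat A -> is_sladj_psh psi ->
  cc_hom (L_psh psi) (L_psh phi) =
  qsup (fun h => exists Z (z : cob A Z), h = qcomp (RL psi Z z) (L_psh phi Z z)).
Proof.
  intros HA Hp. pose proof (L_ladj HA Hp) as HL. rewrite cchom_eq. apply qle_antisym.
  - apply qsup_least. intros h [Z [z ->]]. eapply le_sup. { exists Z, z. reflexivity. }
    rewrite (radj_eq HL). apply qle_refl.
  - apply qsup_least. intros h [Z [z ->]]. eapply le_sup. { exists Z, z. reflexivity. }
    rewrite (radj_eq HL). apply qle_refl.
Qed.

Lemma Kle {Q : IQuantaloid} (A : QCat Q) X Y (psi : psh Y (sym A)) (phi : psh X (sym A))
  (x : qhom Q X Y) :
  is_qcat A -> is_sladj_psh psi -> is_sladj_psh phi ->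
  qle x (cc_hom (L_psh psi) (L_psh phi)) ->
  forall C (c : cob A C) C' (c' : cob A C'),
    qle (qcomp (psi C c) (qcomp x (qinv (phi C' c')))) (chom A c c').
Proof.
  intros HA Hp Hf Hx C c C' c'. rewrite (ccL_hom_eq _ HA Hp) in Hx.
  apply (sandwich Hx). intros s [B [b ->]].
  rewrite <- qcompA. rewrite qcompA.
  pose proof HA as [HAc _].
  eapply qle_trans; [|apply (HAc _ _ _ c b c')].
  apply comp_mono; [apply psi_RL_le|apply L_phi_le]; assumption.
Qed.

Lemma Hs_le_ccL {Q : IQuantaloid} (A : QCat Q) X Y (psi : psh Y (sym A)) (phi : psh X (sym A)) :
  is_qcat A -> is_sladj_psh psi -> qle (Hs psi phi) (cc_hom (L_psh psi) (L_psh phi)).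
Proof.
  intros HA Hp. rewrite (ccL_hom_eq _ HA Hp). apply qsup_least. intros h [Z [z ->]].
  eapply le_sup. { exists Z, z. reflexivity. }
  apply comp_mono; [apply phi_le_RL|apply phi_le_L]; exact HA.
Qed.

Lemma ff_core {Q : IQuantaloid} (A : QCat Q) X Y (psi : psh Y (sym A)) (phi : psh X (sym A)) :
  is_qcat A -> is_sladj_psh psi -> is_sladj_psh phi ->
  qmeet (cc_hom (L_psh psi) (L_psh phi)) (qinv (cc_hom (L_psh phi) (L_psh psi))) = Hs psi phi.
Proof.
  intros HA Hp Hf. apply qle_antisym.
  - set (x := qmeet _ _).
    assert (K : forall C (c : cob A C) C' (c' : cob A C'),
       qle (qcomp (psi C c) (qcomp x (qinv (phi C' c')))) (chom (sym A) c c')).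
    { intros C c C' c'. apply meet_glb.
      - apply Kle; auto. apply meet_l.
      - assert (Hx : qle (qinv x) (cc_hom (L_psh phi) (L_psh psi))) by (apply inv_le_l; apply meet_r).
        pose proof (Kle HA Hf Hp Hx c' c) as K2.
        apply iinv_mono in K2. rewrite !iinv_comp, !iinv_inv in K2.
        rewrite qcompA. exact K2. }
    destruct (sladj_facts Hp) as [_ [Up _]]. destruct (sladj_facts Hf) as [S1f [Uf _]].
    rewrite <- (qcomp1l _ _ _ x), <- (qcomp1r _ _ _ x).
    eapply qle_trans; [apply comp_mono; [exact Up| apply comp_mono_r; exact Uf]|].
    unfold Hs. apply comp_supr_le. intros s [C [c ->]].
    rewrite qcompA. apply comp_supl_le. intros t. intros [C' [c' ->]].
    rewrite <- !qcompA.
    rewrite (qcompA _ _ _ _ _ (phi C' c') (qinv (phi C' c')) x).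
    rewrite (qcompA _ _ _ _ _ (phi C' c') (qcomp x (qinv (phi C' c'))) (psi C c)).
    eapply le_sup. { exists C, c. reflexivity. }
    apply comp_mono_r. eapply qle_trans; [apply comp_mono_l; apply K|]. apply S1f.
  - apply meet_glb.
    + apply Hs_le_ccL; assumption.
    + apply inv_le_r. unfold Hs at 1. apply inv_sup_le. intros s [Z [z ->]].
      rewrite iinv_comp, iinv_inv, (ccL_hom_eq _ HA Hf). eapply le_sup.
      { exists Z, z. reflexivity. }
      apply comp_mono; [apply phi_le_RL|apply phi_le_L]; exact HA.
Qed.

Definition Lobj {Q : IQuantaloid} (A : QCat Q) (HA : is_qcat A) X (phi : cob (sc (sym A)) X)
  : cob (sym (cc A)) X :=
  exist (fun p => is_ladj_psh p) (L_psh (proj1_sig (proj1_sig phi)))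
    (ex_intro _ (rdist (RL (proj1_sig (proj1_sig phi)))) (L_ladj HA (proj2_sig phi))).

Lemma le_from_hom {Q : IQuantaloid} (A : QCat Q) X (phi phi' : psh X A) :
  is_sladj_psh phi -> is_sladj_psh phi' -> qle (qid X) (Hs phi phi') ->
  forall Z (z : cob A Z), qle (phi Z z) (phi' Z z).
Proof.
  intros Hf Hf' H1 Z z. destruct (sladj_facts Hf) as [_ [_ S4]].
  destruct (sladj_facts Hf') as [S1 _].
  rewrite <- (qcomp1r _ _ _ (phi Z z)).
  eapply qle_trans; [apply comp_mono_r; exact H1|]. unfold Hs.
  apply comp_supl_le. intros s [C [c ->]]. rewrite qcompA.
  eapply qle_trans; [|apply (S1 _ _ z c)]. apply comp_mono_l. apply S4.
Qed.

Lemma part1 {Q : IQuantaloid} (A : QCat Q) : is_qcat A ->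
     exists L : forall X, cob (sc (sym A)) X -> cob (sym (cc A)) X,
       (forall X (phi : cob (sc (sym A)) X) Z (z : cob A Z),
          proj1_sig (L X phi) Z z = L_psh (proj1_sig (proj1_sig phi)) Z z) /\
       is_functor L /\ fully_faithful L /\ injective_on_objects L.
Proof.
  intro HA. exists (Lobj HA).
  assert (FF : fully_faithful (Lobj HA)).
  { intros X Y y x.
    change (qmeet (cc_hom (L_psh (proj1_sig (proj1_sig y))) (L_psh (proj1_sig (proj1_sig x))))
             (qinv (cc_hom (L_psh (proj1_sig (proj1_sig x))) (L_psh (proj1_sig (proj1_sig y)))))
            = cc_hom (proj1_sig (proj1_sig y)) (proj1_sig (proj1_sig x))).
    rewrite ff_core by (exact HA || exact (proj2_sig y) || exact (proj2_sig x)).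
    rewrite sc_hom_eq by exact (proj2_sig y). reflexivity. }
  split; [reflexivity|split; [|split; [exact FF|]]].
  - intros X Y y x. rewrite FF. apply qle_refl.
  - intros X x x' Heq.
    assert (E1 := FF X X x x'). assert (E2 := FF X X x x).
    assert (E3 := FF X X x' x). assert (E4 := FF X X x' x').
    rewrite <- Heq in E1. rewrite Heq in E3.
    assert (U1 : qle (qid X) (Hs (proj1_sig (proj1_sig x)) (proj1_sig (proj1_sig x')))).
    { rewrite <- (sc_hom_eq _ (proj2_sig x)).
      change (qle (qid X) (chom (sc (sym A)) x x')). rewrite <- E1, E2.
      change (qle (qid X) (cc_hom (proj1_sig (proj1_sig x)) (proj1_sig (proj1_sig x)))).
      rewrite (sc_hom_eq _ (proj2_sig x)). apply (proj1 (proj2 (sladj_facts (proj2_sig x)))). }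
    assert (U2 : qle (qid X) (Hs (proj1_sig (proj1_sig x')) (proj1_sig (proj1_sig x)))).
    { rewrite <- (sc_hom_eq _ (proj2_sig x')).
      change (qle (qid X) (chom (sc (sym A)) x' x)). rewrite <- E3, E4.
      change (qle (qid X) (cc_hom (proj1_sig (proj1_sig x')) (proj1_sig (proj1_sig x')))).
      rewrite (sc_hom_eq _ (proj2_sig x')). apply (proj1 (proj2 (sladj_facts (proj2_sig x')))). }
    assert (Hpp : proj1_sig (proj1_sig x) = proj1_sig (proj1_sig x')).
    { apply functional_extensionality_dep. intro Z. apply functional_extensionality. intro z.
      pose proof (proj2_sig x) as hx; pose proof (proj2_sig x') as hx'.
      apply qle_antisym; apply le_from_hom; assumption. }
    destruct x as [[p hp] hs]; destruct x' as [[p' hp'] hs']. simpl in Hpp, hs, hs'.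
    subst p'. assert (hp = hp') by apply proof_irrelevance. subst hp'.
    assert (hs = hs') by apply proof_irrelevance. subst hs'. reflexivity.
Qed.

Definition rad {Q : IQuantaloid} {A : QCat Q} {Z} (zeta : psh Z A) W (b : cob A W) : qhom Q W Z :=
  @radj _ _ _ zeta W Z (pt Z) b.
Arguments rad {Q A Z} zeta W b.

Lemma zeta_facts {Q : IQuantaloid} (A : QCat Q) Z (zeta : psh Z A) :
  is_ladj_psh zeta ->
  (forall Y Y' (y' : cob A Y') (y : cob A Y), qle (qcomp (chom A y' y) (zeta Y y)) (zeta Y' y')) /\
  (forall W W' (w : cob A W) (w' : cob A W'), qle (qcomp (rad zeta W w) (chom A w w')) (rad zeta W' w')) /\
  qle (qid Z) (unitsup (rad zeta) zeta) /\
  (forall Y W (y : cob A Y) (w : cob A W), qle (qcomp (zeta Y y) (rad zeta W w)) (chom A y w)).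
Proof. intro H. exact (ladj_elim (radj_spec H)). Qed.

Lemma cc_comp {Q : IQuantaloid} (A : QCat Q) Z1 Z2 Z3 (z1 : psh Z1 A) (z2 : psh Z2 A) (z3 : psh Z3 A) :
  is_ladj_psh z1 -> is_ladj_psh z2 ->
  qle (qcomp (cc_hom z1 z2) (cc_hom z2 z3)) (cc_hom z1 z3).
Proof.
  intros H1 H2. destruct (zeta_facts H1) as [_ [D1 _]]. destruct (zeta_facts H2) as [_ [_ [_ C2]]].
  rewrite !cchom_eq. apply comp_supr_le. intros s [W [b ->]]. apply comp_supl_le. intros t [W' [d ->]].
  rewrite <- qcompA. rewrite (qcompA _ _ _ _ _ (z3 W' d) (@radj _ _ _ z2 W' Z2 (pt Z2) d) (z2 W b)).
  rewrite qcompA. eapply le_sup. { exists W', d. reflexivity. }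
  apply comp_mono_l. eapply qle_trans; [apply comp_mono_r; apply C2|]. apply D1.
Qed.

Lemma cc_hom_with {Q : IQuantaloid} (A : QCat Q) X Y (phi : psh Y A) (R : forall W, cob A W -> qhom Q W Y)
  (psi : psh X A) :
  is_ladj (psh_dist phi) (rdist R) ->
  cc_hom phi psi = qsup (fun h => exists W (b : cob A W), h = qcomp (R W b) (psi W b)).
Proof.
  intros HL. rewrite cchom_eq. apply qle_antisym.
  - apply qsup_least. intros h [Z [z ->]]. eapply le_sup. { exists Z, z. reflexivity. }
    rewrite (radj_eq HL). apply qle_refl.
  - apply qsup_least. intros h [Z [z ->]]. eapply le_sup. { exists Z, z. reflexivity. }
    rewrite (radj_eq HL). apply qle_refl.
Qed.


Definition alpha {Q : IQuantaloid} {A : QCat Q} {X} (Phi : psh X (sym (cc A))) : psh X A :=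
  fun W b => qsup (fun h => exists Z (zeta : cob (cc A) Z), h = qcomp (proj1_sig zeta W b) (Phi Z zeta)).
Arguments alpha {Q A X} Phi Z b : rename.

Definition Ralpha {Q : IQuantaloid} {A : QCat Q} {X} (Phi : psh X (sym (cc A))) W (b : cob A W) : qhom Q W X :=
  qsup (fun h => exists Z (zeta : cob (cc A) Z), h = qcomp (qinv (Phi Z zeta)) (rad (proj1_sig zeta) W b)).
Arguments Ralpha {Q A X} Phi W b.

Lemma part3 {Q : IQuantaloid} (A : QCat Q) : is_qcat A -> sym_complete (sym (cc A)).
Proof.
  intros HA X Phi HPhi. pose proof HA as [HAc HAu].
  destruct (sladj_facts HPhi) as [SP1 [UP SP4]].
  assert (SP1' : forall Z Z' (xi : cob (cc A) Z') (zeta : cob (cc A) Z),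
     qle (qcomp (qmeet (cc_hom (proj1_sig xi) (proj1_sig zeta)) (qinv (cc_hom (proj1_sig zeta) (proj1_sig xi)))) (Phi Z zeta)) (Phi Z' xi))
    by exact SP1.
  assert (SP4' : forall Y Z (xi : cob (cc A) Y) (zeta : cob (cc A) Z),
     qle (qcomp (Phi Y xi) (qinv (Phi Z zeta))) (qmeet (cc_hom (proj1_sig xi) (proj1_sig zeta)) (qinv (cc_hom (proj1_sig zeta) (proj1_sig xi)))))
    by exact SP4.
  clear SP1 SP4.
  assert (Hal : is_ladj (psh_dist (alpha Phi)) (rdist (Ralpha Phi))).
  { apply ladj_intro.
    - intros Y Y' y' y. unfold alpha at 1. apply comp_supl_le. intros s [Z [zeta ->]].
      eapply le_sup. { exists Z, zeta. reflexivity. }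
      rewrite qcompA. apply comp_mono_l. apply (zeta_facts (proj2_sig zeta)).
    - intros W W' w w'. unfold Ralpha at 1. apply comp_supr_le. intros s [Z [zeta ->]].
      eapply le_sup. { exists Z, zeta. reflexivity. }
      rewrite <- qcompA. apply comp_mono_r. apply (zeta_facts (proj2_sig zeta)).
    - eapply qle_trans; [exact UP|]. unfold Hs. apply qsup_least. intros h [Z [zeta ->]].
      destruct (zeta_facts (proj2_sig zeta)) as [_ [_ [Uz _]]].
      rewrite <- (qcomp1l _ _ _ (Phi Z zeta)) at 2.
      apply (sandwich Uz). intros s [W [b ->]]. unfold unitsup. eapply le_sup. { exists W, b. reflexivity. }
      rewrite <- qcompA, qcompA. apply comp_mono.
      + unfold Ralpha. eapply le_sup. { exists Z, zeta. reflexivity. } apply qle_refl.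
      + unfold alpha. eapply le_sup. { exists Z, zeta. reflexivity. } apply qle_refl.
    - intros Y W y w. unfold alpha at 1. apply comp_supr_le. intros s [Z1 [xi ->]].
      unfold Ralpha. apply comp_supl_le. intros t [Z2 [zeta ->]].
      rewrite <- qcompA.
      rewrite (qcompA _ _ _ _ _ (rad (proj1_sig zeta) W w) (qinv (Phi Z2 zeta)) (Phi Z1 xi)).
      eapply qle_trans; [apply comp_mono_r; apply comp_mono_l; eapply qle_trans; [apply SP4'|apply meet_l]|].
      assert (E : qle (cc_hom (proj1_sig xi) (proj1_sig zeta)) (cc_hom (proj1_sig xi) (proj1_sig zeta))) by apply qle_refl.
      rewrite cchom_eq in E at 2.
      apply (sandwich E). intros s [V [d ->]].
      rewrite <- qcompA, qcompA.
      eapply qle_trans; [|apply (HAc _ _ _ y d w)].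
      destruct (zeta_facts (proj2_sig xi)) as [_ [_ [_ Cx]]].
      destruct (zeta_facts (proj2_sig zeta)) as [_ [_ [_ Cz]]].
      apply comp_mono; [apply Cx|apply Cz]. }
  exists (exist (fun p => is_ladj_psh p) (alpha Phi) (ex_intro _ _ Hal)).
  intros Z zeta.
  change (Phi Z zeta = qmeet (cc_hom (proj1_sig zeta) (alpha Phi)) (qinv (cc_hom (alpha Phi) (proj1_sig zeta)))).
  change (cob (cc A) Z) in zeta.
  destruct (zeta_facts (proj2_sig zeta)) as [_ [_ [Uz _]]].
  assert (Hca : forall Y (psi : psh Y A), cc_hom (alpha Phi) psi =
     qsup (fun h => exists W (b : cob A W), h = qcomp (Ralpha Phi W b) (psi W b)))
    by (intros; apply cc_hom_with; exact Hal).
  apply qle_antisym.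
  - apply meet_glb.
    + rewrite <- (qcomp1l _ _ _ (Phi Z zeta)).
      eapply qle_trans; [apply comp_mono_l; exact Uz|]. unfold unitsup. apply comp_supr_le.
      intros s [W [b ->]]. rewrite cchom_eq. eapply le_sup. { exists W, b. reflexivity. }
      rewrite <- qcompA. apply comp_mono_r. unfold alpha. eapply le_sup. { exists Z, zeta. reflexivity. }
      apply qle_refl.
    + apply inv_le_r. rewrite Hca. rewrite <- (qcomp1r _ _ _ (qinv (Phi Z zeta))).
      eapply qle_trans; [apply comp_mono_r; exact Uz|]. unfold unitsup. apply comp_supl_le.
      intros s [W [b ->]]. eapply le_sup. { exists W, b. reflexivity. }
      rewrite qcompA. apply comp_mono_l. unfold Ralpha. eapply le_sup. { exists Z, zeta. reflexivity. }
      apply qle_refl.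
  - set (x := qmeet _ _).
    assert (K : forall Y (eta : cob (cc A) Y),
       qle (qcomp x (qinv (Phi Y eta)))
           (qmeet (cc_hom (proj1_sig zeta) (proj1_sig eta)) (qinv (cc_hom (proj1_sig eta) (proj1_sig zeta))))).
    { intros Y eta. apply meet_glb.
      - assert (Hx : qle x (cc_hom (proj1_sig zeta) (alpha Phi))) by apply meet_l.
        rewrite cchom_eq in Hx.
        rewrite <- (qcomp1l _ _ _ (qcomp x _)).
        apply (sandwich Hx). intros s [W [b ->]]. rewrite qcomp1l, <- qcompA.
        assert (Ha : qle (alpha Phi W b) (alpha Phi W b)) by apply qle_refl.
        unfold alpha in Ha at 2.
        apply (sandwich Ha). intros t [Z1 [xi ->]].
        rewrite <- qcompA, qcompA.
        eapply qle_trans; [|apply (cc_comp _ (proj2_sig zeta) (proj2_sig xi))].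
        apply comp_mono.
        + rewrite cchom_eq. eapply le_sup. { exists W, b. reflexivity. } apply qle_refl.
        + eapply qle_trans; [apply SP4'|apply meet_l].
      - apply inv_le_r. rewrite iinv_comp, iinv_inv.
        assert (Hx : qle (qinv x) (cc_hom (alpha Phi) (proj1_sig zeta))) by (apply inv_le_l; apply meet_r).
        rewrite Hca in Hx.
        rewrite <- (qcomp1r _ _ _ (qinv x)).
        apply (sandwich Hx). intros s [W [b ->]]. rewrite qcomp1r.
        assert (Ha : qle (Ralpha Phi W b) (Ralpha Phi W b)) by apply qle_refl.
        unfold Ralpha in Ha at 2.
        apply (sandwich Ha). intros t [Z1 [xi ->]].
        rewrite <- qcompA, qcompA.
        eapply qle_trans; [|apply (cc_comp _ (proj2_sig eta) (proj2_sig xi))].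
        apply comp_mono.
        + eapply qle_trans; [apply SP4'|apply meet_l].
        + rewrite cchom_eq. eapply le_sup. { exists W, b. reflexivity. } apply qle_refl. }
    rewrite <- (qcomp1r _ _ _ x).
    eapply qle_trans; [apply comp_mono_r; exact UP|]. unfold Hs. apply comp_supl_le.
    intros s [Y [eta ->]]. rewrite qcompA.
    eapply qle_trans; [|apply (SP1' _ _ zeta eta)]. apply comp_mono_l. apply K.
Qed.

Theorem proposition3p4 (Q : IQuantaloid) :
  (* L_A : (A_s)_sc -> (A_cc)_s, phi |-> A(-,S_A-) (x) phi, is a full embedding *)
  (forall A : QCat Q, is_qcat A ->
     exists L : forall X, cob (sc (sym A)) X -> cob (sym (cc A)) X,
       (forall X (phi : cob (sc (sym A)) X) Z (z : cob A Z),
          proj1_sig (L X phi) Z z = L_psh (proj1_sig (proj1_sig phi)) Z z) /\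
       is_functor L /\ fully_faithful L /\ injective_on_objects L) /\
  (* naturality: (F_cc)_s o L_A = L_B o (F_s)_sc *)
  (forall (A B : QCat Q) (F : forall X, cob A X -> cob B X),
     is_qcat A -> is_qcat B -> is_functor F ->
     forall X (phi : cob (sc (sym A)) X) Z (z : cob B Z),
       Fcc_psh F (L_psh (proj1_sig (proj1_sig phi))) Z z
       = L_psh (Fsc_psh F (proj1_sig (proj1_sig phi))) Z z) /\
  (* (A_cc)_s is symmetrically complete *)
  (forall A : QCat Q, is_qcat A -> sym_complete (sym (cc A))).
Proof.
  split; [|split].
  - intros A HA. exact (part1 HA).
  - intros A B F HA HB HF X phi Z z. apply naturality; assumption.
  - intros A HA. exact (part3 HA).
Qed.
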